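(* Let $X$ and $Y$ be disjoint sets, each of cardinality at least two, and let $M \le \mathrm{Sym}(X)$ and $N \le \mathrm{Sym}(Y)$ be nontrivial permutation groups. Then the box product $M \boxtimes N \le \mathrm{Sym}(V_Y)$ satisfies: (1) $M \boxtimes N$ is transitive on $V_Y$ if and only if $M$ is transitive on $X$; (2) $M \boxtimes N$ is primitive on $V_Y$ if and only if $M$ is primitive but not regular on $X$, and $N$ is transitive on $Y$.
   Context: Permutations act on the left. Let $T$ be the $(|X|,|Y|)$-biregular tree, with its natural bipartition $VT = V_X \sqcup V_Y$, where every vertex of $V_X$ has valency $|X|$ and every vertex of $V_Y$ has valency $|Y|$. An arc is an ordered pair $(u,w)$ of adjacent vertices, with origin $o(u,w)=u$ and terminus $t(u,w)=w$; $AT$ is the set of arcs, $A(v)$ the set of arcs with origin $v$, and $\overline{A}(v)$ the set of arcs with terminus $v$. Automorphisms of $T$ act on arcs in the obvious way. A legal colouring of $X$ and $Y$ is a map $c: AT \to X \cup Y$ such that for every $v \in V_X$ the restriction $c|_{A(v)}: A(v)\to X$ is a bijection, for every $v \in V_Y$ the restriction $c|_{A(v)}: A(v) \to Y$ is a bijection, and for every $v \in VT$ the restriction $c|_{\overline{A}(v)}$ is constant. For a legal colouring $c$, define $U_c(M,N)$ to be the set of $g \in \mathrm{Aut}(T)$ with $gV_X = V_X$ such that $c|_{A(gv)} \circ g|_{A(v)} \circ (c|_{A(v)})^{-1}$ lies in $M$ for all $v \in V_X$ and lies in $N$ for all $v \in V_Y$; this is a subgroup of $\mathrm{Aut}(T)$.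 The box product $M \boxtimes N$ is the subgroup of $\mathrm{Sym}(V_Y)$ induced by $U_c(M,N)$; up to permutation isomorphism it does not depend on the choice of legal colouring $c$. A transitive group is primitive if it preserves no equivalence relation other than the trivial and universal ones; it is regular if transitive with trivial point stabilisers. *)

(* Defs.v *)
From mathcomp Require Import ssreflect ssrfun ssrbool seq.

Set Implicit Arguments.
Unset Strict Implicit.
Unset Printing Implicit Defensive.

Definition perm_group (T : Type) (G : (T -> T) -> Prop) : Prop :=
  [/\ G id,
      (forall s, G s -> exists t, [/\ G t, cancel s t & cancel t s]) &
      (forall s t, G s -> G t -> G (s \o t))].

Definition nontrivial_group (T : Type) (G : (T -> T) -> Prop) : Prop :=
  exists s, G s /\ exists x, s x <> x.

Definition perm_transitive (T : Type) (G : (T -> T) -> Prop) : Prop :=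
  forall a b : T, exists s, G s /\ s a = b.

Definition preserves (T : Type) (G : (T -> T) -> Prop) (R : T -> T -> Prop) :=
  forall s a b, G s -> R a b -> R (s a) (s b).

Definition equivalence_rel (T : Type) (R : T -> T -> Prop) : Prop :=
  [/\ (forall a, R a a), (forall a b, R a b -> R b a) &
      (forall a b c, R a b -> R b c -> R a c)].

Definition perm_primitive (T : Type) (G : (T -> T) -> Prop) : Prop :=
  perm_transitive G /\
  forall R : T -> T -> Prop, equivalence_rel R -> preserves G R ->
    (forall a b, R a b -> a = b) \/ (forall a b, R a b).

Definition perm_regular (T : Type) (G : (T -> T) -> Prop) : Prop :=
  perm_transitive G /\
  forall s a, G s -> s a = a -> forall b, s b = b.

Fixpoint walk (V : Type) (adj : V -> V -> Prop) (u : V) (s : seq V) : Prop :=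
  match s with
  | [::] => True
  | w :: s' => adj u w /\ walk adj w s'
  end.

Fixpoint nonbacktracking (V : Type) (u : V) (s : seq V) : Prop :=
  match s with
  | w :: ((z :: _) as s') => u <> z /\ nonbacktracking w s'
  | _ => True
  end.

Definition is_tree (V : Type) (adj : V -> V -> Prop) : Prop :=
  [/\ inhabited V,
      (forall u w, adj u w -> adj w u),
      (forall u v, exists s, walk adj u s /\ last u s = v) &
      (forall u s, s <> [::] -> walk adj u s -> nonbacktracking u s ->
         last u s <> u)].

(* [side v = true] means v \in V_X, [side v = false] means v \in V_Y;
   adjacent vertices lie on different sides. *)
Definition is_bipartition (V : Type) (adj : V -> V -> Prop) (side : V -> bool) :=
  forall u w, adj u w -> side u <> side w.

Definition biregular (X Y V : Type) (adj : V -> V -> Prop) (side : V -> bool) :=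
  (forall v, side v = true ->
     exists f : X -> V, (forall x, adj v (f x)) /\ injective f /\
                        (forall w, adj v w -> exists x, f x = w)) /\
  (forall v, side v = false ->
     exists f : Y -> V, (forall y, adj v (f y)) /\ injective f /\
                        (forall w, adj v w -> exists y, f y = w)).

(* Legal colourings.  The disjoint union X \cup Y is modelled by X + Y.    *)
(* An arc is a pair (u,w) with adj u w; a colouring is c : V -> V -> X + Y *)
(* (only its values on arcs matter).                                        *)

Definition legal_colouring (X Y V : Type) (adj : V -> V -> Prop)
    (side : V -> bool) (c : V -> V -> X + Y) : Prop :=
  [/\
      (forall v, side v = true ->
         [/\ (forall w, adj v w -> exists x, c v w = inl x),
             (forall w w', adj v w -> adj v w' -> c v w = c v w' -> w = w') &
             (forall x, exists w, adj v w /\ c v w = inl x)]),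
      (forall v, side v = false ->
         [/\ (forall w, adj v w -> exists y, c v w = inr y),
             (forall w w', adj v w -> adj v w' -> c v w = c v w' -> w = w') &
             (forall y, exists w, adj v w /\ c v w = inr y)]) &
      (forall v u u', adj u v -> adj u' v -> c u v = c u' v)].

Definition tree_aut_pres (V : Type) (adj : V -> V -> Prop) (side : V -> bool)
    (g : V -> V) : Prop :=
  [/\ bijective g,
      (forall u w, adj u w <-> adj (g u) (g w)) &
      (forall v, side (g v) = side v)].

(* local action at v in V_X: the permutation
   c|A(gv) o g|A(v) o (c|A(v))^-1 of X lies in M *)
Definition local_in_X (X Y V : Type) (adj : V -> V -> Prop)
    (c : V -> V -> X + Y) (M : (X -> X) -> Prop) (g : V -> V) (v : V) : Prop :=
  exists s : X -> X, M s /\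
    forall w x, adj v w -> c v w = inl x -> c (g v) (g w) = inl (s x).

Definition local_in_Y (X Y V : Type) (adj : V -> V -> Prop)
    (c : V -> V -> X + Y) (N : (Y -> Y) -> Prop) (g : V -> V) (v : V) : Prop :=
  exists s : Y -> Y, N s /\
    forall w y, adj v w -> c v w = inr y -> c (g v) (g w) = inr (s y).

Definition U_c (X Y V : Type) (adj : V -> V -> Prop) (side : V -> bool)
    (c : V -> V -> X + Y) (M : (X -> X) -> Prop) (N : (Y -> Y) -> Prop)
    (g : V -> V) : Prop :=
  [/\ tree_aut_pres adj side g,
      (forall v, side v = true -> local_in_X adj c M g v) &
      (forall v, side v = false -> local_in_Y adj c N g v)].

Definition VY (V : Type) (side : V -> bool) : Type := {v : V | side v = false}.

Definition box_product (X Y V : Type) (adj : V -> V -> Prop) (side : V -> bool)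
    (c : V -> V -> X + Y) (M : (X -> X) -> Prop) (N : (Y -> Y) -> Prop)
    : (VY side -> VY side) -> Prop :=
  fun f => exists g, U_c adj side c M N g /\
                     forall v : VY side, proj1_sig (f v) = g (proj1_sig v).

Arguments box_product {X Y V} adj side c M N _.

(* Main.v *)
Require Import Defs.
From mathcomp Require Import ssreflect ssrfun ssrbool eqtype seq.
From Stdlib Require Import Classical ClassicalEpsilon.
From Stdlib Require Import Relations.Relation_Operators Relations.Operators_Properties.

Set Implicit Arguments.
Unset Strict Implicit.
Unset Printing Implicit Defensive.

Lemma primP (T : Type) (M : (T -> T) -> Prop) : perm_group M ->
  perm_primitive M -> ~ perm_regular M ->
  forall a b : T, a <> b -> exists s, [/\ M s, s a = a & s b <> b].
Proof.
move=> [M1 Minv Mc] [tr pr] nreg a b ab.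
apply: NNPP => nex.
have H : forall s, M s -> s a = a -> s b = b.
  move=> s Ms sa; apply: NNPP => sb; apply: nex; by exists s.
pose R x y := exists m h, [/\ M m, M h, h b = b, x = m a & y = m (h a)].
have Req : Defs.equivalence_rel R.
  split.
  - move=> x; have [m [Mm ma]] := tr a x.
    by exists m, id; split.
  - move=> x y [m [h [Mm Mh hb -> ->]]].
    have [h' [Mh' hK h'K]] := Minv _ Mh.
    exists (m \o h), h'; split => //=; first exact: Mc.
      by rewrite -{1}hb hK.
    by rewrite h'K.
  - move=> x y z [m [h [Mm Mh hb -> e]]] [m' [h' [Mm' Mh' hb' e' ->]]].
    have [mi [Mmi mK miK]] := Minv _ Mm.
    have [hi [Mhi hK hiK]] := Minv _ Mh.
    pose t := hi \o mi \o m'.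
    have Mt : M t by apply: (Mc) => //; apply: (Mc).
    have ta : t a = a by rewrite /t /= -e' e mK hK.
    have tb : t b = b := H _ Mt ta.
    have mt : forall v, m (h (t v)) = m' v by move=> v; rewrite /t /= hiK miK.
    exists m, (h \o t \o h'); split => //.
    + apply: (Mc); [apply: (Mc)|] => //.
    + by rewrite /= hb' tb hb.
    + by rewrite /= mt.
have Rpres : preserves M R.
  move=> s x y Ms [m [h [Mm Mh hb -> ->]]].
  exists (s \o m), h; split => //; exact: Mc.
case: (pr R Req Rpres) => [Req1|Runiv].
-
  have Hb : forall s, M s -> s b = b -> s a = a.
    move=> s Ms sb; apply: esym; apply: Req1; by exists id, s; split.
  pose E x y := forall s, M s -> (s x = x <-> s y = y).
  have Eeq : Defs.equivalence_rel E.
    split.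
    - by move=> x s _.
    - by move=> x y h s Ms; split => /(h s Ms).
    - move=> x y z h1 h2 s Ms; rewrite h1 //; exact: h2.
  have Epres : preserves M E.
    move=> s x y Ms hxy t Mt.
    have [si [Msi sK siK]] := Minv _ Ms.
    have Mu : M (si \o t \o s) by apply: (Mc) => //; apply: (Mc).
    have := hxy _ Mu; rewrite /=.
    split => e.
      have : si (t (s x)) = x by rewrite e sK.
      move/(proj1 (hxy _ Mu)) => /= e2; by rewrite -{2}e2 siK.
    have : si (t (s y)) = y by rewrite e sK.
    move/(proj2 (hxy _ Mu)) => /= e2; by rewrite -{2}e2 siK.
  case: (pr E Eeq Epres) => [E1|Eu].
    apply: ab; apply: E1 => s Ms; split; [exact: H | exact: Hb].
  apply: nreg; split => // s x Ms sx y; exact: (proj1 (Eu x y s Ms) sx).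
- have [m [h [Mm Mh hb ma e]]] := Runiv a b.
  have [mi [Mmi mK miK]] := Minv _ Mm.
  have [hi [Mhi hK hiK]] := Minv _ Mh.
  have mb : m b = b := H _ Mm (esym ma).
  have mib : mi b = b by rewrite -{1}mb mK.
  have hib : hi b = b by rewrite -{1}hb hK.
  apply: ab; rewrite -(hK a) -(mK (h a)) -e mib hib //.
Qed.

Section Tree.
Variable V : Type.
Variable adj : V -> V -> Prop.
Hypothesis adj_sym : forall u w, adj u w -> adj w u.
Hypothesis nocyc : forall u s, s <> [::] -> walk adj u s ->
  nonbacktracking u s -> last u s <> u.

Implicit Types (u w v z n : V) (s : seq V).

Fixpoint allv (P : V -> Prop) (s : seq V) : Prop :=
  match s with [::] => True | x :: s' => P x /\ allv P s' end.

Lemma adj_irr u w : adj u w -> u <> w.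
Proof. move=> h e; apply: (nocyc (u:=u) (s:=[:: w])) => //=; by rewrite e. Qed.

Lemma walk_rcons u s v : walk adj u (rcons s v) <-> walk adj u s /\ adj (last u s) v.
Proof.
elim: s u => [|w s IH] u /=; first by split; [case | case].
rewrite IH; tauto.
Qed.

Lemma allv_rcons P s v : allv P (rcons s v) <-> allv P s /\ P v.
Proof. elim: s => [|w s IH] /=; [tauto | rewrite IH; tauto]. Qed.

Lemma nb_tail u w s : nonbacktracking u (w :: s) -> nonbacktracking w s.
Proof. by case: s => [|z s] //= []. Qed.

Lemma nb_rcons_inv u s v : nonbacktracking u (rcons s v) -> nonbacktracking u s.
Proof.
elim: s u => [|w s IH] u //=.
case: s IH => [|z s] IH //=.
move=> [h1 h2]; split => //. exact: IH.
Qed.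

Fixpoint pen (u : V) (s : seq V) : V :=
  match s with [::] => u | w :: s' => if s' is [::] then u else pen w s' end.

Lemma nb_rcons u s v : nonbacktracking u s -> (s <> [::] -> pen u s <> v) ->
  nonbacktracking u (rcons s v).
Proof.
elim: s u => [|w s IH] u //=.
case: s IH => [|z s] IH /=.
  move=> _ h; split => //; exact: h.
move=> [h1 h2] h; split => //. apply: IH => // _; exact: h.
Qed.

Lemma pen_all P u s : P u -> allv P s -> P (pen u s).
Proof.
elim: s u => [|w s IH] u //= pu [pw ps].
case: s IH ps => [|z s] IH ps //. exact: IH.
Qed.

Lemma nb_avoid u s : walk adj u s -> nonbacktracking u s -> allv (fun x => x <> u) s.
Proof.
elim/last_ind: s => [|t x IH] //.
move=> /walk_rcons [wt ax] nb; apply/allv_rcons; split.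
  by apply: IH => //; apply: nb_rcons_inv nb.
have := nocyc (u:=u) (s:=rcons t x).
rewrite last_rcons => H; apply: H => //.
  by case: t {IH wt ax nb}.
by apply/walk_rcons.
Qed.

Definition rz (z : V) := fun x y => adj x y /\ x <> z /\ y <> z.
Definition rtz (z : V) := clos_refl_trans V (rz z).

Lemma rtz_sym z a b : rtz z a b -> rtz z b a.
Proof.
elim=> [x y [h1 [h2 h3]]| x | x y w _ IH1 _ IH2].
- apply: rt_step; split; [exact: adj_sym| tauto].
- exact: rt_refl.
- exact: rt_trans IH2 IH1.
Qed.

Lemma walk_rtz z a s : walk adj a s -> a <> z -> allv (fun x => x <> z) s ->
  rtz z a (last a s).
Proof.
elim: s a => [|w s IH] a /=; first by move=> *; exact: rt_refl.
move=> [aw ws] az [wz al].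
apply: rt_trans (IH w ws wz al). by apply: rt_step.
Qed.

Lemma rtz_walk z a b : rtz z a b -> a <> z ->
  exists s, [/\ walk adj a s, last a s = b & allv (fun x => x <> z) s].
Proof.
move=> h; elim: (clos_rt_rt1n _ _ _ _ h) => [x|x y w [xy [xz yz]] _ IH] xz'.
  by exists [::].
have [s [ws ls al]] := IH yz.
by exists (y :: s).
Qed.

Definition eqVb (a b : V) : bool :=
  if excluded_middle_informative (a = b) then true else false.

Lemma eqVbP a b : reflect (a = b) (eqVb a b).
Proof. rewrite /eqVb; case: excluded_middle_informative => h; by constructor. Qed.

Fixpoint red (u : V) (s : seq V) : seq V :=
  match s with
  | [::] => [::]
  | w :: s' => match red w s' with
               | [::] => [:: w]
               | z :: p => if eqVb z u then p else w :: z :: p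
               end
  end.

Lemma red_walk u s : walk adj u s -> walk adj u (red u s).
Proof.
elim: s u => [|w s IH] u //= [uw ws].
have := IH w ws; case: (red w s) => [|z p] /=; first by [].
case: eqVbP => [->|_] /=; tauto.
Qed.

Lemma red_last u s : last u (red u s) = last u s.
Proof.
elim: s u => [|w s IH] u //=.
rewrite -IH; case: (red w s) => [|z p] //=.
by case: eqVbP => [->|_].
Qed.

Lemma red_nb u s : nonbacktracking u (red u s).
Proof.
elim: s u => [|w s IH] u //=.
have := IH w; case: (red w s) => [|z p] //=.
case: eqVbP => [->|ne] h; first exact: nb_tail h.
by split => //; apply: nesym.
Qed.

Lemma red_all P u s : allv P s -> allv P (red u s).
Proof.
elim: s u => [|w s IH] u //= [pw ps].
have := IH w ps; case: (red w s) => [|z p] //=.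
by case: eqVbP => [->|_] /=; tauto.
Qed.

Lemma branch_sep z n n' : adj z n -> adj z n' -> n <> n' -> rtz z n n' -> False.
Proof.
move=> zn zn' nn' rt.
have nz : n <> z by move=> e; apply: (adj_irr zn); rewrite e.
have [s [ws ls al]] := rtz_walk rt nz.
set r := red n s.
have wr : walk adj n r := red_walk ws.
have lr : last n r = n' by rewrite red_last.
have ar : allv (fun x => x <> z) r := red_all n al.
have nr : nonbacktracking n r := red_nb n s.
have rne : r <> [::] by move=> e; apply: nn'; rewrite -lr e.
apply: (nocyc (u:=z) (s:=rcons (n :: r) z)).
- by case: (r) rne.
- apply/walk_rcons; split => //=; rewrite lr; exact: adj_sym.
- apply: nb_rcons.
    move: nr ar; case: (r) => [|y r'] //= nr [yz _]; split => //; exact: nesym.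
  move=> _ /=; move: rne ar; case: (r) => [|y r'] //= _ ar.
  change (pen n (y :: r') <> z); exact (pen_all (P:=fun x => x <> z) (u:=n) (s:=y::r') nz ar).
- exact: last_rcons.
Qed.

Lemma nb_unique u p q : walk adj u p -> nonbacktracking u p ->
  walk adj u q -> nonbacktracking u q -> last u p = last u q -> p = q.
Proof.
elim: p u q => [|a p IH] u q.
  move=> _ _ wq nq /= e; case: q wq nq e => [|a' q'] // wq nq e.
  exfalso; apply: (nocyc (u:=u) (s:=a'::q')) => //.
case: q => [|a' q].
  move=> wp np _ _ /= e; exfalso; apply: (nocyc (u:=u) (s:=a::p)) => //.
move=> wp np wq nq e.
case: (classic (a = a')) => [aa|aa].
  subst a'; congr (_ :: _); apply: (IH a) => //.
  - by case: wp.
  - exact: nb_tail np.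
  - by case: wq.
  - exact: nb_tail nq.
exfalso.
have /= [au avp] := nb_avoid wp np.
have /= [au' avq] := nb_avoid wq nq.
case: wp => ua wp; case: wq => ua' wq.
have r1 := walk_rtz wp au avp.
have r2 := walk_rtz wq au' avq.
simpl in e; rewrite e in r1.
apply: (branch_sep ua ua' aa).
exact: rt_trans r1 (rtz_sym r2).
Qed.



Hypothesis conn : forall u v, exists s, walk adj u s /\ last u s = v.

Variables X Y : Type.
Variable side : V -> bool.
Variable c : V -> V -> X + Y.
Hypothesis bip : is_bipartition adj side.
Hypothesis legal : legal_colouring adj side c.
Variable x0 : X.
Variable y0 : Y.

Definition is_inl (l : X + Y) : bool := if l is inl _ then true else false.

Lemma side_adj u w : adj u w -> side w = ~~ side u.
Proof. move=> /bip; by case: (side u); case: (side w). Qed.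

Lemma has_nbr v : exists w, adj v w.
Proof.
case: legal => LX LY _.
case sv: (side v).
  by have [w [h _]] := (let: And3 _ _ h := LX v sv in h) x0; exists w.
by have [w [h _]] := (let: And3 _ _ h := LY v sv in h) y0; exists w.
Qed.

Definition nbr v : V := proj1_sig (constructive_indefinite_description _ (has_nbr v)).
Lemma nbrP v : adj v (nbr v).
Proof. exact: (proj2_sig (constructive_indefinite_description _ (has_nbr v))). Qed.

Definition lab v : X + Y := c (nbr v) v.

Lemma lab_c u v : adj u v -> c u v = lab v.
Proof. case: legal => _ _ L h; apply: L => //; exact/adj_sym/nbrP. Qed.

Lemma lab_kind w : is_inl (lab w) = ~~ side w.
Proof.
have a := adj_sym (nbrP w); have sa := side_adj a.
case: legal => LX LY _; rewrite /lab.
case su: (side (nbr w)) sa => /= ->.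
  by have [x ->] := (let: And3 h _ _ := LX _ su in h) _ a.
by have [y ->] := (let: And3 h _ _ := LY _ su in h) _ a.
Qed.

Lemma lab_inj v w w' : adj v w -> adj v w' -> lab w = lab w' -> w = w'.
Proof.
move=> a a'; rewrite -(lab_c a) -(lab_c a') => e.
case: legal => LX LY _.
case sv: (side v).
  by have [_ h _] := LX _ sv; apply: h.
by have [_ h _] := LY _ sv; apply: h.
Qed.

Lemma lab_ex v l : is_inl l = side v -> exists w, adj v w /\ lab w = l.
Proof.
case: legal => LX LY _.
case: l => [x|y] /= e.
  have [_ _ h] := LX _ (esym e); have [w [a cw]] := h x.
  by exists w; rewrite -(lab_c a).
have [_ _ h] := LY _ (esym e); have [w [a cw]] := h y.
by exists w; rewrite -(lab_c a).
Qed.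

Fixpoint corr (f : X + Y -> X + Y) (s s' : seq V) : Prop :=
  match s, s' with
  | [::], [::] => True
  | w :: s1, w' :: s1' => lab w' = f (lab w) /\ corr f s1 s1'
  | _, _ => False
  end.

Section Corr.
Variable f : X + Y -> X + Y.
Hypothesis f_kind : forall l, is_inl (f l) = is_inl l.
Hypothesis f_inj : injective f.

Lemma corr_exists a a' s : walk adj a s -> side a = side a' ->
  exists s', walk adj a' s' /\ corr f s s'.
Proof.
elim: s a a' => [|w s IH] a a' /=; first by exists [::].
move=> [aw ws] e.
have [w' [a'w' lw']] : exists w', adj a' w' /\ lab w' = f (lab w).
  apply: lab_ex; rewrite f_kind lab_kind (side_adj aw) -e; by case: (side a).
have e' : side w = side w'.
  apply: negb_inj; rewrite -!lab_kind lw' f_kind //.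
have [s' [ws' cs]] := IH _ _ ws e'.
by exists (w' :: s').
Qed.

Lemma corr_unique a' s s' t' : walk adj a' s' -> walk adj a' t' ->
  corr f s s' -> corr f s t' -> s' = t'.
Proof.
elim: s a' s' t' => [|w s IH] a' [|w1 s1] [|w2 s2] //= [a1 ws1] [a2 ws2] [l1 c1] [l2 c2].
have e : w1 = w2 by apply: (lab_inj a1 a2); rewrite l1 l2.
subst w2; congr (_ :: _); exact: (IH w1).
Qed.

Lemma corr_last a a' s s' : corr f s s' -> lab a' = f (lab a) ->
  lab (last a' s') = f (lab (last a s)).
Proof.
elim: s a a' s' => [|w s IH] a a' [|w' s'] //= [l c1] _; exact: IH.
Qed.

Lemma corr_rcons s s' w w' : corr f s s' -> lab w' = f (lab w) ->
  corr f (rcons s w) (rcons s' w').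
Proof.
elim: s s' => [|v s IH] [|v' s'] //= [l c1] e; split => //; exact: IH.
Qed.

Lemma corr_size s s' : corr f s s' -> size s = size s'.
Proof. elim: s s' => [|w s IH] [|w' s'] //= [_ h]; by rewrite (IH _ h). Qed.

Lemma corr_red a a' s s' : walk adj a s -> walk adj a' s' -> corr f s s' ->
  lab a' = f (lab a) -> corr f (red a s) (red a' s').
Proof.
elim: s a a' s' => [|w s IH] a a' [|w' s'] //= [aw ws] [aw' ws'] [lw cs] la.
have := IH _ _ _ ws ws' cs lw.
have := red_walk ws; have := red_walk ws'.
case: (red w s) => [|z p]; case: (red w' s') => [|z' p'] //=.
move=> [wz' _] [wz _] [lz cp].
have eq1 : (z = a) <-> (z' = a').
  split=> e.
    subst z; apply: (lab_inj wz' (adj_sym aw')); by rewrite lz la.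
  subst z'; apply: (lab_inj wz (adj_sym aw)); apply: f_inj; by rewrite -lz la.
case: eqVbP => e1; case: eqVbP => e2 //=.
- by exfalso; apply: e2; apply/eq1.
- by exfalso; apply: e1; apply/eq1.
Qed.

Definition Rel b u u' := exists s s', [/\ walk adj b s, walk adj b s', corr f s s',
  last b s = u & last b s' = u'].

Lemma Rel_tot b u : exists u', Rel b u u'.
Proof.
have [s [ws ls]] := conn b u.
have [s' [ws' cs]] := corr_exists ws (erefl (side b)).
by exists (last b s'), s, s'.
Qed.

Lemma Rel_fun b u u1 u2 : lab b = f (lab b) -> Rel b u u1 -> Rel b u u2 -> u1 = u2.
Proof.
move=> hb [s [s' [ws ws' cs ls ls']]] [t [t' [wt wt' ct lt lt']]].
have e : red b s = red b t.
  apply: (nb_unique (u:=b)); try exact: red_walk; try exact: red_nb.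
  by rewrite !red_last ls lt.
have c1 := corr_red ws ws' cs hb.
have c2 := corr_red wt wt' ct hb.
rewrite e in c1.
have e' := corr_unique (red_walk ws') (red_walk wt') c1 c2.
by rewrite -ls' -lt' -(red_last b s') -(red_last b t') e'.
Qed.

Definition hmap b u : V := proj1_sig (constructive_indefinite_description _ (Rel_tot b u)).
Lemma hmapP b u : Rel b u (hmap b u).
Proof. exact: (proj2_sig (constructive_indefinite_description _ (Rel_tot b u))). Qed.

Lemma hmap_b b : lab b = f (lab b) -> hmap b b = b.
Proof. move=> hb; apply: (Rel_fun hb (hmapP b b)); by exists [::], [::]. Qed.

Lemma hmap_lab b u : lab b = f (lab b) -> lab (hmap b u) = f (lab u).
Proof.
move=> hb; have [s [s' [ws ws' cs <- <-]]] := hmapP b u.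
exact: corr_last.
Qed.

Lemma hmap_adj b u w : lab b = f (lab b) -> adj u w -> adj (hmap b u) (hmap b w).
Proof.
move=> hb uw; have [s [s' [ws ws' cs ls ls']]] := hmapP b u.
have [w' [a lw']] : exists w', adj (hmap b u) w' /\ lab w' = f (lab w).
  apply: lab_ex; rewrite f_kind lab_kind (side_adj uw).
  rewrite negbK; apply: negb_inj; rewrite -!lab_kind -ls' (corr_last cs hb) f_kind ls //.
have : Rel b w w'.
  exists (rcons s w), (rcons s' w'); split.
  - by apply/walk_rcons; rewrite ls.
  - by apply/walk_rcons; rewrite ls'.
  - exact: corr_rcons.
  - exact: last_rcons.
  - exact: last_rcons.
by move/(Rel_fun hb (hmapP b w)) => ->.
Qed.

End Corr.

Lemma corr_sym f g s s' : cancel f g -> corr f s s' -> corr g s' s.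
Proof.
move=> fK; elim: s s' => [|w s IH] [|w' s'] //= [l c1]; split; last exact: IH.
by rewrite l fK.
Qed.

Lemma unif b f g : cancel f g -> cancel g f -> (forall l, is_inl (f l) = is_inl l) ->
  lab b = f (lab b) ->
  exists h, [/\ tree_aut_pres adj side h, h b = b & forall u, lab (h u) = f (lab u)].
Proof.
move=> fK gK fk hb.
have gk : forall l, is_inl (g l) = is_inl l.
  by move=> l; rewrite -{2}(gK l) fk.
have hb' : lab b = g (lab b) by rewrite {2}hb fK.
have fi : injective f := can_inj fK.
have gi : injective g := can_inj gK.
pose h := hmap fk b; pose k := hmap gk b.
have hk : forall u, k (h u) = u.
  move=> u; have [s [s' [ws ws' cs ls ls']]] := hmapP fk b u.
  apply: (Rel_fun gi hb' (hmapP gk b (h u))).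
  exists s', s; split => //; exact: corr_sym cs.
have kh : forall u, h (k u) = u.
  move=> u; have [s [s' [ws ws' cs ls ls']]] := hmapP gk b u.
  apply: (Rel_fun fi hb (hmapP fk b (k u))).
  exists s', s; split => //; exact: corr_sym cs.
exists h; split.
- split.
  + by exists k.
  + move=> u w; split; first exact: hmap_adj.
    move=> a; rewrite -(hk u) -(hk w); exact: hmap_adj.
  + move=> v; apply: negb_inj; rewrite -!lab_kind hmap_lab //.
- exact: hmap_b.
- move=> u; exact: hmap_lab.
Qed.



Variables (M : (X -> X) -> Prop) (N : (Y -> Y) -> Prop).
Hypothesis pgM : perm_group M.
Hypothesis pgN : perm_group N.

Definition smap (s : X -> X) (t : Y -> Y) (l : X + Y) : X + Y :=
  match l with inl x => inl (s x) | inr y => inr (t y) end.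

Notation UC := (U_c adj side c M N).

Lemma unif_U b (s : X -> X) (t : Y -> Y) : M s -> N t -> lab b = smap s t (lab b) ->
  exists h, [/\ UC h, h b = b & forall u, lab (h u) = smap s t (lab u)].
Proof.
move=> Ms Nt hb.
case: pgM => _ Minv _; case: pgN => _ Ninv _.
have [s' [_ sK s'K]] := Minv _ Ms.
have [t' [_ tK t'K]] := Ninv _ Nt.
have c1 : cancel (smap s t) (smap s' t') by case=> [x|y] /=; rewrite ?sK ?tK.
have c2 : cancel (smap s' t') (smap s t) by case=> [x|y] /=; rewrite ?s'K ?t'K.
have k1 : forall l, is_inl (smap s t l) = is_inl l by case.
have [h [ha hbb hl]] := unif c1 c2 k1 hb.
exists h; split => //.
split => //.
- move=> v _; exists s; split => // w x a e.
  case: ha => _ ad _.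
  rewrite (lab_c (proj1 (ad _ _) a)) hl -(lab_c a) e //.
- move=> v _; exists t; split => // w x a e.
  case: ha => _ ad _.
  rewrite (lab_c (proj1 (ad _ _) a)) hl -(lab_c a) e //.
Qed.

Lemma U_id : UC id.
Proof.
case: pgM => M1 _ _; case: pgN => N1 _ _.
split.
- split => //; by exists id.
- move=> v _; by exists id.
- move=> v _; by exists id.
Qed.

Lemma U_comp g g' : UC g -> UC g' -> UC (g' \o g).
Proof.
case: pgM => _ _ Mc; case: pgN => _ _ Nc.
move=> [[bg ag sg] Xg Yg] [[bg' ag' sg'] Xg' Yg'].
split.
- split.
  + exact: bij_comp.
  + move=> u w /=; rewrite ag ag' //.
  + move=> v /=; by rewrite sg' sg.
- move=> v sv.
  have [s1 [Ms1 h1]] := Xg v sv.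
  have [s2 [Ms2 h2]] := Xg' (g v) (etrans (sg v) sv).
  exists (s2 \o s1); split; first exact: Mc.
  move=> w x a e /=; apply: h2; [exact: (proj1 (ag _ _) a) | exact: h1].
- move=> v sv.
  have [s1 [Ms1 h1]] := Yg v sv.
  have [s2 [Ms2 h2]] := Yg' (g v) (etrans (sg v) sv).
  exists (s2 \o s1); split; first exact: Nc.
  move=> w x a e /=; apply: h2; [exact: (proj1 (ag _ _) a) | exact: h1].
Qed.

Lemma U_labY g w : UC g -> side w = false ->
  exists sg : X -> X, M sg /\ forall x : X, lab w = inl x -> lab (g w) = inl (sg x).
Proof.
move=> [[_ ag _] Xg _] sw.
have a := adj_sym (nbrP w).
have sv : side (nbr w) = true by rewrite (side_adj (nbrP w)) sw.
have [s [Ms h]] := Xg _ sv.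
exists s; split => // x e.
rewrite -(lab_c (proj1 (ag _ _) a)); apply: h => //; by rewrite (lab_c a).
Qed.

Lemma U_labX g w : UC g -> side w = true ->
  exists sg : Y -> Y, N sg /\ forall y : Y, lab w = inr y -> lab (g w) = inr (sg y).
Proof.
move=> [[_ ag _] _ Yg] sw.
have a := adj_sym (nbrP w).
have sv : side (nbr w) = false by rewrite (side_adj (nbrP w)) sw.
have [s [Ms h]] := Yg _ sv.
exists s; split => // x e.
rewrite -(lab_c (proj1 (ag _ _) a)); apply: h => //; by rewrite (lab_c a).
Qed.



Lemma rtz_neq z a b : rtz z a b -> a <> z -> b <> z.
Proof. elim=> [x y [_ [_ h]] | x | x y w _ IH1 _ IH2] //; auto. Qed.

Lemma rtz_map (h : V -> V) z a b : (forall u w, adj u w -> adj (h u) (h w)) ->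
  injective h -> h z = z -> rtz z a b -> rtz z (h a) (h b).
Proof.
move=> ad hi hz; elim=> [x y [xy [xz yz]] | x | x y w _ IH1 _ IH2].
- apply: rt_step; split; first exact: ad.
  by split=> e; [apply: xz | apply: yz]; apply: hi; rewrite e hz.
- exact: rt_refl.
- exact: rt_trans IH1 IH2.
Qed.

Lemma glue z n0 h : UC h -> h z = z -> h n0 = n0 -> adj z n0 ->
  exists g, [/\ UC g, forall u, rtz z n0 u -> g u = u &
                     forall u, ~ rtz z n0 u -> g u = h u].
Proof.
move=> hU hz hn0 zn0.
case: (hU) => [[[k hk kh] ag sg] Xh Yh].
have hi : injective h := can_inj hk.
have ki : injective k := can_inj kh.
have adh : forall u w, adj u w -> adj (h u) (h w) by move=> u w /ag.
have adk : forall u w, adj u w -> adj (k u) (k w).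
  by move=> u w a; apply/ag; rewrite !kh.
have kz : k z = z by rewrite -{1}hz hk.
have kn0 : k n0 = n0 by rewrite -{1}hn0 hk.
pose B u := rtz z n0 u.
have n0z : n0 <> z by move=> e; apply: (adj_irr zn0); rewrite e.
have hB : forall u, B (h u) <-> B u.
  move=> u; split => Bu.
    by have := rtz_map adk ki kz Bu; rewrite kn0 hk.
  by have := rtz_map adh hi hz Bu; rewrite hn0.
have kB : forall u, B (k u) <-> B u.
  by move=> u; rewrite -{2}(kh u) hB.
have nBz : ~ B z by move=> Bz; exact: (rtz_neq Bz n0z).
have F3 : forall u w, adj u w -> B u -> ~ B w -> w = z /\ u = n0.
  move=> u w uw Bu nBw.
  have uz : u <> z := rtz_neq Bu n0z.
  have wz : w = z.
    apply: NNPP => wz; apply: nBw; apply: rt_trans Bu _; apply: rt_step; by split.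
  split => //; subst w.
  apply: NNPP => un0; apply: (branch_sep zn0 (adj_sym uw) (nesym un0) Bu).
pose g u := if excluded_middle_informative (B u) then u else h u.
have gB : forall u, B u -> g u = u.
  by move=> u Bu; rewrite /g; case: excluded_middle_informative.
have gnB : forall u, ~ B u -> g u = h u.
  by move=> u Bu; rewrite /g; case: excluded_middle_informative.
have gz : g z = z by rewrite gnB.
have around : forall v, (g v = v /\ forall w, adj v w -> g w = w) \/
                        (g v = h v /\ forall w, adj v w -> g w = h w).
  move=> v; case: (classic (B v)) => Bv; [left|right].
    split; first exact: gB.
    move=> w vw; case: (classic (B w)) => Bw; first exact: gB.
    by have [-> _] := F3 _ _ vw Bv Bw.
  split; first exact: gnB.
  move=> w vw; case: (classic (B w)) => Bw; last exact: gnB.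
  have [e1 e2] := F3 _ _ (adj_sym vw) Bw Bv.
  by rewrite gB // e2 hn0.
have gadj : forall u w, adj u w <-> adj (g u) (g w).
  move=> u w; case: (classic (B u)) => Bu; case: (classic (B w)) => Bw.
  - by rewrite !gB.
  - rewrite gB // gnB //; split=> a.
      have [-> ->] := F3 _ _ a Bu Bw; rewrite hz; exact: adj_sym.
    have nBhw : ~ B (h w) by rewrite hB.
    have [e1 ->] := F3 _ _ a Bu nBhw.
    by rewrite -hz in e1; rewrite (hi _ _ e1); exact: adj_sym.
  - rewrite gnB // gB //; split=> a.
      by have [-> ->] := F3 _ _ (adj_sym a) Bw Bu; rewrite hz.
    have nBhu : ~ B (h u) by rewrite hB.
    have [e1 ->] := F3 _ _ (adj_sym a) Bw nBhu.
    by rewrite -hz in e1; rewrite (hi _ _ e1).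
  - by rewrite !gnB.
exists g; split => //.
split.
- split.
  + pose k' u := if excluded_middle_informative (B u) then u else k u.
    exists k' => u; rewrite /k' /g.
      case: excluded_middle_informative => Bu.
        by case: excluded_middle_informative.
      case: excluded_middle_informative => H; last exact: hk.
      by exfalso; exact: (Bu (proj1 (hB u) H)).
    case: excluded_middle_informative => Bu.
      by case: excluded_middle_informative.
    case: excluded_middle_informative => H; last exact: kh.
    by exfalso; exact: (Bu (proj1 (kB u) H)).
  + exact: gadj.
  + move=> v; case: (around v) => [[-> _]|[-> _]] //.
- move=> v sv; case: (around v) => [[gv ga]|[gv ga]].
    case: pgM => M1 _ _; exists id; split => // w x a e.
    by rewrite gv ga.
  have [s [Ms hs]] := Xh v sv; exists s; split => // w x a e.
  by rewrite gv ga //; apply: hs.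
- move=> v sv; case: (around v) => [[gv ga]|[gv ga]].
    case: pgN => N1 _ _; exists id; split => // w x a e.
    by rewrite gv ga.
  have [s [Ms hs]] := Yh v sv; exists s; split => // w x a e.
  by rewrite gv ga //; apply: hs.
Qed.



Lemma lab_inl u : side u = false -> exists x : X, lab u = inl x.
Proof. move=> su; move: (lab_kind u); rewrite su; case: (lab u) => // x _; by exists x. Qed.
Lemma lab_inr u : side u = true -> exists y : Y, lab u = inr y.
Proof. move=> su; move: (lab_kind u); rewrite su; case: (lab u) => // y _; by exists y. Qed.

Lemma side_lab_inl u (x : X) : lab u = inl x -> side u = false.
Proof. move=> e; move: (lab_kind u); rewrite e; by case: (side u). Qed.
Lemma side_lab_inr u (y : Y) : lab u = inr y -> side u = true.
Proof. move=> e; move: (lab_kind u); rewrite e; by case: (side u). Qed.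

Lemma nofix (p : bool) : p = ~~ p -> False. Proof. by case: p. Qed.
Lemma negb_swap (p q : bool) : ~~ p = q -> p = ~~ q. Proof. by case: p; case: q. Qed.

Lemma step_conn (bb : bool) (P : V -> Prop) :
  (forall z u u', side z = ~~ bb -> adj z u -> adj z u' -> P u -> P u') ->
  forall u u', side u = bb -> side u' = bb -> P u -> P u'.
Proof.
move=> st u u' su su' Pu.
have [s [ws ls]] := conn u u'.
pose K v := (side v = bb -> P v) /\ (side v = ~~ bb -> exists w, adj v w /\ P w).
suff : K (last u s) by rewrite ls => -[h _]; exact: h.
have Ku : K u.
  split; first by move=> _. move=> e; exfalso; apply: (@nofix bb); by rewrite -{1}su.
elim: s u ws Ku {ls Pu su} => [|w s IH] u //= [uw ws] [K1 K2].
apply: IH => //.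
have sw := side_adj uw.
split => e.
- have sa : side u = ~~ bb by apply: negb_swap; rewrite -sw.
  have [w0 [a P0]] := K2 sa.
  exact: (st u w0 w sa a uw P0).
- have sa : side u = bb by apply: negb_inj; rewrite -sw.
  exists u; split; [exact: adj_sym | exact: K1].
Qed.

Lemma sig_eqY (a b : VY side) : proj1_sig a = proj1_sig b -> a = b.
Proof.
case: a => a pa; case: b => b pb /= e; subst b.
by rewrite (eq_irrelevance pa pb).
Qed.

Lemma box_of_U g : UC g -> exists f, box_product adj side c M N f /\
  forall a : VY side, proj1_sig (f a) = g (proj1_sig a).
Proof.
move=> gU; case: (gU) => [[_ _ sg] _ _].
have sgf : forall a : VY side, side (g (proj1_sig a)) = false.
  by move=> a; rewrite sg; exact: (proj2_sig a).
exists (fun a : VY side => exist (fun v => side v = false) (g (proj1_sig a)) (sgf a)).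
split => //; by exists g.
Qed.

Lemma box_U f : box_product adj side c M N f -> exists g, UC g /\
  forall a : VY side, proj1_sig (f a) = g (proj1_sig a).
Proof. by []. Qed.

Variable v0 : V.

Lemma exX : exists z, side z = true.
Proof.
case sv: (side v0); first by exists v0.
exists (nbr v0); by rewrite (side_adj (nbrP v0)) sv.
Qed.

Lemma exY : exists z, side z = false.
Proof.
case sv: (side v0); last by exists v0.
exists (nbr v0); by rewrite (side_adj (nbrP v0)) sv.
Qed.

Lemma mkY u : side u = false -> exists a : VY side, proj1_sig a = u.
Proof. move=> su; by exists (exist _ u su). Qed.

Lemma nbr_lab z l : is_inl l = side z -> exists u, [/\ adj z u, lab u = l & side u = ~~ side z].
Proof. move=> e; have [u [a l1]] := lab_ex e; exists u; split => //; exact: side_adj. Qed.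

Lemma part1a : perm_transitive (box_product adj side c M N) -> perm_transitive M.
Proof.
move=> tr x1 x2.
have [z sz] := exX.
have [u1 [a1 l1 s1]] := @nbr_lab z (inl x1) (esym sz).
have [u2 [a2 l2 s2]] := @nbr_lab z (inl x2) (esym sz).
rewrite sz /= in s1 s2.
have [f [bf fe]] := tr (exist _ u1 s1) (exist _ u2 s2).
have [g [gU ge]] := box_U bf.
have := ge (exist _ u1 s1); rewrite fe /= => e.
have [s [Ms hs]] := U_labY gU s1.
exists s; split => //.
have := hs _ l1; rewrite -e l2; by case.
Qed.

Lemma part1b : perm_transitive M -> perm_transitive (box_product adj side c M N).
Proof.
move=> tr a b.
case: pgN => N1 _ _.
suff [g [gU ge]] : exists g, UC g /\ g (proj1_sig a) = proj1_sig b.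
  have [f [bf fe]] := box_of_U gU; exists f; split => //.
  by apply: sig_eqY; rewrite fe.
apply: (@step_conn false (fun u => exists g, UC g /\ g (proj1_sig a) = u) _ (proj1_sig a) (proj1_sig b)).
- move=> z u u' sz zu zu' [g [gU ge]].
  have [x lu] := lab_inl (etrans (side_adj zu) (f_equal negb sz)).
  have [x' lu'] := lab_inl (etrans (side_adj zu') (f_equal negb sz)).
  have [s [Ms sx]] := tr x x'.
  have [y lz] := lab_inr sz.
  have e0 : lab z = smap s id (lab z) by rewrite lz.
  have [h [hU hz hl]] := @unif_U z s id Ms N1 e0.
  exists (h \o g); split; first exact: U_comp.
  rewrite /= ge; apply: (lab_inj (v:=z)) => //.
    by case: hU => [[_ ad _] _ _]; rewrite -{1}hz; apply: (proj1 (ad _ _)).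
  by rewrite hl lu lu' /= sx.
- exact: (proj2_sig a).
- exact: (proj2_sig b).
- exists id; split => //; exact: U_id.
Qed.



Variables (xa xb : X) (ya yb : Y).
Hypothesis xab : xa <> xb.
Hypothesis yab : ya <> yb.

Lemma other_x (x : X) : exists x' : X, x' <> x.
Proof.
case: (classic (x = xa)) => [->|h]; first by exists xb; apply: nesym.
by exists xa; apply: nesym.
Qed.
Lemma other_y (y : Y) : exists y' : Y, y' <> y.
Proof.
case: (classic (y = ya)) => [->|h]; first by exists yb; apply: nesym.
by exists ya; apply: nesym.
Qed.

Lemma crt_sym (S : V -> V -> Prop) x y : (forall x y, S x y -> S y x) ->
  clos_refl_trans V S x y -> clos_refl_trans V S y x.
Proof.
move=> Ss; elim=> [x' y' h|x'|x' y' z' _ IH1 _ IH2].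
- exact/rt_step/Ss.
- exact: rt_refl.
- exact: rt_trans IH2 IH1.
Qed.

Lemma crt_map (S : V -> V -> Prop) (g : V -> V) x y :
  (forall x y, S x y -> S (g x) (g y)) ->
  clos_refl_trans V S x y -> clos_refl_trans V S (g x) (g y).
Proof.
move=> Sg; elim=> [x' y' h|x'|x' y' z' _ IH1 _ IH2].
- exact/rt_step/Sg.
- exact: rt_refl.
- exact: rt_trans IH1 IH2.
Qed.

Lemma liftR (S : V -> V -> Prop) :
  (forall g u u', UC g -> S u u' -> S (g u) (g u')) ->
  preserves (box_product adj side c M N) (fun a b : VY side => S (proj1_sig a) (proj1_sig b)).
Proof.
move=> H f a b bf /=; have [g [gU ge]] := box_U bf; rewrite !ge; exact: H.
Qed.

Lemma U_adj g u w : UC g -> adj u w -> adj (g u) (g w).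
Proof. by case=> [[_ ad _] _ _] /ad. Qed.

Lemma U_side g u : UC g -> side (g u) = side u.
Proof. by case=> [[_ _ sg] _ _]. Qed.

Lemma U_locX g z u (x : X) : UC g -> side z = true -> adj z u -> lab u = inl x ->
  exists sg : X -> X, M sg /\ forall u' (x' : X), adj z u' -> lab u' = inl x' -> lab (g u') = inl (sg x').
Proof.
move=> gU sz zu lu; case: (gU) => [[_ ad _] Xg _].
have [s [Ms hs]] := Xg z sz.
exists s; split => // u' x' a l.
rewrite -(lab_c (proj1 (ad _ _) a)); apply: hs => //; by rewrite lab_c.
Qed.

Lemma side_nbrY z u : side z = true -> adj z u -> side u = false.
Proof. by move=> sz a; rewrite (side_adj a) sz. Qed.
Lemma side_nbrX z u : side z = false -> adj z u -> side u = true.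
Proof. by move=> sz a; rewrite (side_adj a) sz. Qed.

Lemma neq_side u w : side u <> side w -> u <> w.
Proof. by move=> h e; apply: h; rewrite e. Qed.

Lemma part2_N : perm_primitive (box_product adj side c M N) -> perm_transitive N.
Proof.
move=> [tr pr]; apply: NNPP => ntr.
have [y1 [y2 H]] : exists y1 y2 : Y, forall n' : Y -> Y, N n' -> n' y1 <> y2.
  apply: NNPP => H; apply: ntr => p q; apply: NNPP => H2; apply: H.
  exists p, q => n Nn e; apply: H2; by exists n.
case: (pgN) => N1 _ Nc.
pose O (y : Y) := exists n' : Y -> Y, N n' /\ n' y1 = y.
pose S u u' := exists z y, [/\ adj z u, adj z u', lab z = inr y & O y].
have Ssym : forall u u', S u u' -> S u' u.
  by move=> u u' [z [y [a1 a2 l o]]]; exists z, y; split.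
pose R (a b : VY side) := clos_refl_trans V S (proj1_sig a) (proj1_sig b).
have Req : Defs.equivalence_rel R.
  split.
  - move=> a; exact: rt_refl.
  - move=> a b; exact: crt_sym.
  - move=> a b d; exact: rt_trans.
have Rpres : preserves (box_product adj side c M N) R.
  apply: (liftR (S := clos_refl_trans V S)) => g u u' gU.
  apply: crt_map => v v' [z [y [a1 a2 l [n [Nn e]]]]].
  have sz := side_lab_inr l.
  have [s [Ns hs]] := U_labX gU sz.
  exists (g z), (s y); split; try exact: U_adj.
  - exact: hs.
  - exists (s \o n); split; [exact: Nc | by rewrite /= e].
have [w sw] := exY.
case: (pr R Req Rpres) => [Req1|Runiv].
- have [z [wz lz sz]] := @nbr_lab w (inr y1) (esym sw).
  rewrite sw /= in sz.
  have [u1 [a1 l1 s1]] := @nbr_lab z (inl xa) (esym sz).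
  have [u2 [a2 l2 s2]] := @nbr_lab z (inl xb) (esym sz).
  rewrite sz /= in s1 s2.
  have := Req1 (exist _ u1 s1) (exist _ u2 s2).
  have HR : R (exist _ u1 s1) (exist _ u2 s2).
    apply: rt_step; exists z, y1; split => //; by exists id.
  move=> /(_ HR) e; apply: xab.
  have : u1 = u2 by move: e => [].
  by move=> e'; move: l1 l2; rewrite e' => -> [].
- have [z [wz lz sz]] := @nbr_lab w (inr y2) (esym sw).
  rewrite sw /= in sz.
  have [u1 [a1 l1 s1]] := @nbr_lab z (inl xa) (esym sz).
  have [u2 [a2 l2 s2]] := @nbr_lab z (inl xb) (esym sz).
  rewrite sz /= in s1 s2.
  have u12 : u1 <> u2 by move=> e; apply: xab; move: l1 l2; rewrite e => -> [].
  have T := Runiv (exist _ u1 s1) (exist _ u2 s2); rewrite /R /= in T.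
  suff : rtz z u1 u2 by exact: branch_sep.
  elim: (clos_rt_rtn1 _ _ _ _ T) => [|v v'' Svv _ IH]; first exact: rt_refl.
  move: Svv => [z1 [y [a3 a4 l3 o3]]].
  have z1z : z1 <> z.
    move=> e; subst z1; move: lz; rewrite l3 => -[ey]; subst y.
    case: o3 => n [Nn e]; exact: (H n Nn e).
  have sz1 := side_lab_inr l3.
  have vz : v <> z by apply: neq_side; rewrite (side_nbrY sz1 a3) sz.
  have v''z : v'' <> z by apply: neq_side; rewrite (side_nbrY sz1 a4) sz.
  apply: rt_trans IH _; apply: rt_trans (rt_step _ _ v z1 _) (rt_step _ _ z1 v'' _).
  + by split => //; exact: adj_sym.
  + by split.
Qed.



Lemma part2_Mprim : perm_primitive (box_product adj side c M N) -> perm_primitive M.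
Proof.
move=> [tr pr]; split; first exact: part1a.
move=> R Req Rpres; apply: NNPP => H.
have [p [q [Rpq pq]]] : exists p q, R p q /\ p <> q.
  apply: NNPP => H1; apply: H; left => p q Rpq; apply: NNPP => e; apply: H1.
  by exists p, q.
have [cc [d nR]] : exists cc d, ~ R cc d.
  apply: NNPP => H1; apply: H; right => p' q'; apply: NNPP => e; apply: H1.
  by exists p', q'.
case: Req => Rr Rs Rt.
pose S u u' := exists z (x x' : X), [/\ adj z u, adj z u', lab u = inl x, lab u' = inl x' & R x x'].
pose T (a b : VY side) := clos_refl_trans V S (proj1_sig a) (proj1_sig b).
have Teq : Defs.equivalence_rel T.
  split.
  - move=> a; exact: rt_refl.
  - move=> a b; apply: crt_sym => u u' [z [x [x' [a1 a2 l1 l2 r]]]].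
    exists z, x', x; split => //; exact: Rs.
  - move=> a b e; exact: rt_trans.
have Tpres : preserves (box_product adj side c M N) T.
  apply: (liftR (S := clos_refl_trans V S)) => g u u' gU.
  apply: crt_map => v v' [z [x [x' [a1 a2 l1 l2 r]]]].
  have sz : side z = true.
    by move: (side_adj a1); rewrite (side_lab_inl l1); case: (side z).
  have [s [Ms hs]] := U_locX gU sz a1 l1.
  exists (g z), (s x), (s x'); split; try exact: U_adj.
  - exact: hs.
  - exact: hs.
  - exact: Rpres.
have [z sz] := exX.
case: (pr T Teq Tpres) => [Teq1|Tuniv].
- have [u1 [a1 l1 s1]] := @nbr_lab z (inl p) (esym sz).
  have [u2 [a2 l2 s2]] := @nbr_lab z (inl q) (esym sz).
  rewrite sz /= in s1 s2.
  have HT : T (exist _ u1 s1) (exist _ u2 s2).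
    by apply: rt_step; exists z, p, q; split.
  have := Teq1 _ _ HT => -[e]; apply: pq.
  by move: l1 l2; rewrite e => -> [].
- have [u1 [a1 l1 s1]] := @nbr_lab z (inl cc) (esym sz).
  have [u2 [a2 l2 s2]] := @nbr_lab z (inl d) (esym sz).
  rewrite sz /= in s1 s2.
  have TT := Tuniv (exist _ u1 s1) (exist _ u2 s2); rewrite /T /= in TT.
  pose Q v := exists n (x : X), [/\ adj z n, rtz z n v, lab n = inl x & R x cc].
  suff : Q u2.
    move=> [n [x [zn rn ln rx]]].
    have e : n = u2 by apply: NNPP => ne; exact: (branch_sep zn a2 ne rn).
    subst n; move: ln; rewrite l2 => -[ex]; subst x.
    by apply: nR; apply: Rs.
  elim: (clos_rt_rtn1 _ _ _ _ TT) => [|v v'' Svv _ IH].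
    by exists u1, cc; split => //; exact: rt_refl.
  move: Svv IH => [z1 [x1 [x2 [b1 b2 m1 m2 r12]]]] [n [x [zn rn ln rx]]].
  case: (classic (z1 = z)) => ez.
  + subst z1.
    have e : n = v by apply: NNPP => ne; exact: (branch_sep zn b1 ne rn).
    subst n; move: ln; rewrite m1 => -[ex]; subst x.
    exists v'', x2; split => //; first exact: rt_refl.
    by apply: Rt rx; apply: Rs.
  + have sz1 : side z1 = true.
      by move: (side_adj b1); rewrite (side_lab_inl m1); case: (side z1).
    have vz : v <> z by apply: neq_side; rewrite (side_lab_inl m1) sz.
    have v''z : v'' <> z by apply: neq_side; rewrite (side_lab_inl m2) sz.
    exists n, x; split => //.
    apply: rt_trans rn _; apply: rt_trans (rt_step _ _ v z1 _) (rt_step _ _ z1 v'' _).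
    * by split => //; exact: adj_sym.
    * by split.
Qed.

Lemma reg_pres g u u' : perm_regular M -> UC g -> side u = false -> side u' = false ->
  lab u = lab u' -> lab (g u) = lab (g u').
Proof.
move=> [_ Mst] gU su su' e.
case: (pgM) => _ Minv Mc.
pose P v := exists sg : X -> X, [/\ M sg,
  (forall x : X, lab u = inl x -> lab (g u) = inl (sg x)) &
  (forall x : X, lab v = inl x -> lab (g v) = inl (sg x))].
have : P u'.
  apply: (@step_conn false P _ u u') => //.
  - move=> z v v' sz zv zv' [sg [Msg h1 h2]].
    have [xv lv] := lab_inl (side_nbrY sz zv).
    have [sz' [Msz hz]] := U_locX gU sz zv lv.
    have ee : sg xv = sz' xv.
      by have := h2 _ lv; rewrite (hz _ _ zv lv) => -[].
    have [si [Msi sK siK]] := Minv _ Msg.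
    have Mt : M (si \o sz') by exact: Mc.
    have tfix := Mst _ xv Mt; rewrite /= -ee sK in tfix.
    have agree : forall y, sz' y = sg y.
      by move=> y; rewrite -{2}(tfix erefl y) siK.
    exists sg; split => // x lx.
    by rewrite (hz _ _ zv' lx) agree.
  - have [sg [Msg h]] := U_labY gU su; by exists sg; split.
move=> [sg [_ h1 h2]].
have [x lx] := lab_inl su.
by rewrite (h1 _ lx) (h2 x) // -e.
Qed.

Lemma part2_Mreg : perm_primitive (box_product adj side c M N) -> ~ perm_regular M.
Proof.
move=> [tr pr] reg.
pose T (a b : VY side) := lab (proj1_sig a) = lab (proj1_sig b).
have Teq : Defs.equivalence_rel T.
  split.
  - by move=> a.
  - by move=> a b.
  - by move=> a b d; rewrite /T => ->.
have Tpres : preserves (box_product adj side c M N) T.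
  move=> f a b bf; have [g [gU ge]] := box_U bf; rewrite /T !ge.
  apply: reg_pres => //; [exact: (proj2_sig a) | exact: (proj2_sig b)].
case: (pr T Teq Tpres) => [Teq1|Tuniv].
- have [w sw] := exY.
  have [x1 lw] := lab_inl sw.
  pose z1 := nbr w.
  have wz1 : adj w z1 := nbrP w.
  have sz1 : side z1 = true by rewrite (side_adj wz1) sw.
  have [x2 x21] := other_x x1.
  have [w2 [a2 l2 s2]] := @nbr_lab z1 (inl x2) (esym sz1).
  rewrite sz1 /= in s2.
  have [yz lz] := lab_inr sz1.
  have [y3 y3z] := other_y yz.
  have [z3 [a3 l3 s3]] := @nbr_lab w2 (inr y3) (esym s2).
  rewrite s2 /= in s3.
  have [w3 [a4 l4 s4]] := @nbr_lab z3 (inl x1) (esym s3).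
  rewrite s3 /= in s4.
  have HT : T (exist _ w sw) (exist _ w3 s4) by rewrite /T /= lw l4.
  have := Teq1 _ _ HT => -[e].
  have wk : walk adj w [:: z1; w2; z3; w3] by [].
  have nb : nonbacktracking w [:: z1; w2; z3; w3].
    split; last split; last split.
    * by move=> ew; move: l2; rewrite -ew lw => -[ex]; apply: x21.
    * by move=> ez; move: l3; rewrite -ez lz => -[ey]; apply: y3z.
    * by move=> ew; move: l4; rewrite -ew l2 => -[ex]; apply: x21.
    * done.
  exact: (nocyc (u:=w) (s:=[:: z1; w2; z3; w3]) _ wk nb (esym e)).
- have [z sz] := exX.
  have [u1 [a1 l1 s1]] := @nbr_lab z (inl xa) (esym sz).
  have [u2 [a2 l2 s2]] := @nbr_lab z (inl xb) (esym sz).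
  rewrite sz /= in s1 s2.
  have := Tuniv (exist _ u1 s1) (exist _ u2 s2); rewrite /T /= l1 l2 => -[].
  exact: xab.
Qed.



Lemma part2_conv : perm_primitive M -> ~ perm_regular M -> perm_transitive N ->
  perm_primitive (box_product adj side c M N).
Proof.
move=> Mp nreg Ntr; split; first exact: (part1b (proj1 Mp)).
move=> R Req Rpres.
case: (classic (forall a b, R a b -> a = b)) => [H|H]; [by left | right].
have [a [b [Rab ab]]] : exists a b, R a b /\ a <> b.
  apply: NNPP => H1; apply: H => a b Rab; apply: NNPP => e; apply: H1.
  by exists a, b.
case: (Req) => Rr Rs Rt.
case: (pgM) => M1 _ _; case: (pgN) => N1 _ _.
pose E u u' := exists a b : VY side, [/\ proj1_sig a = u, proj1_sig b = u' & R a b].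
have E_refl : forall u, side u = false -> E u u.
  by move=> u su; exists (exist _ u su), (exist _ u su); split.
have E_sym : forall u u', E u u' -> E u' u.
  by move=> u u' [p [q [e1 e2 r]]]; exists q, p; split => //; exact: Rs.
have E_trans : forall u u' u'', E u u' -> E u' u'' -> E u u''.
  move=> u u' u'' [p [q [e1 e2 r]]] [p' [q' [e1' e2' r']]].
  have e : q = p' by apply: sig_eqY; rewrite e2 e1'.
  subst p'; exists p, q'; split => //; exact: Rt r r'.
have E_g : forall g u u', UC g -> E u u' -> E (g u) (g u').
  move=> g u u' gU [p [q [e1 e2 r]]].
  have [f [bf fe]] := box_of_U gU.
  exists (f p), (f q); split; [by rewrite fe e1 | by rewrite fe e2 | exact: Rpres].
pose w := proj1_sig a; pose w' := proj1_sig b.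
have sw : side w = false := proj2_sig a.
have sw' : side w' = false := proj2_sig b.
have ww' : w <> w' by move=> e; apply: ab; apply: sig_eqY.
have Eww' : E w w' by exists a, b.
have [s [ws ls]] := conn w' w.
have wr := red_walk ws.
have lr : last w' (red w' s) = w by rewrite red_last.
have nr := red_nb w' s.
have [z [n0 [r2 [w'z [zn0 wr2 w'n0 nr2 lr2]]]]] :
  exists z n0 r2, adj w' z /\ [/\ adj z n0, walk adj n0 r2, w' <> n0,
                    nonbacktracking z (n0 :: r2) & last n0 r2 = w].
  move: wr lr nr; case: (red w' s) => [|z [|n0 r2]] /=.
  - by move=> _ e; exfalso; apply: ww'.
  - move=> [a1 _] e _; exfalso; subst z.
    by move: (side_adj a1); rewrite sw sw'.
  - move=> [a1 [a2 a3]] e [ne nb].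
    by exists z, n0, r2; split => //; split.
have sz : side z = true by rewrite (side_adj w'z) sw'.
have [/= n0z avr2] := nb_avoid (u:=z) (s:=n0::r2) (conj zn0 wr2) nr2.
have rn0w : rtz z n0 w by rewrite -lr2; apply: walk_rtz.
have [a0 l0] := lab_inl (side_nbrY sz zn0).
have [a1 l1] := lab_inl sw'.
have a01 : a0 <> a1.
  move=> e; apply: w'n0; apply: (lab_inj (v:=z)) => //; first exact: adj_sym.
  by rewrite l0 l1 e.
have [sg [Msg sa0 sa1]] := primP pgM Mp nreg a01.
have [yz lz] := lab_inr sz.
have ez : lab z = smap sg id (lab z) by rewrite lz.
have [h [hU hz hl]] := unif_U Msg N1 ez.
have hn0 : h n0 = n0.
  apply: (lab_inj (v:=z)) => //; first by rewrite -{1}hz; exact: U_adj.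
  by rewrite hl l0 /= sa0.
have [g [gU gB gnB]] := glue hU hz hn0 zn0.
have nBw' : ~ rtz z n0 w'.
  move=> rb; apply: (branch_sep zn0 (adj_sym w'z) (nesym w'n0) rb).
pose w'' := h w'.
have zw'' : adj z w'' by rewrite /w'' -{1}hz; apply: U_adj => //; exact: adj_sym.
have lw'' : lab w'' = inl (sg a1) by rewrite /w'' hl l1.
have Ew'w'' : E w' w''.
  have := E_g _ _ _ gU Eww'; rewrite gB // gnB // => Ew.
  exact: E_trans (E_sym _ _ Eww') Ew.
pose nbrsRel z' := forall u u', adj z' u -> adj z' u' -> E u u'.
have nz : nbrsRel z.
  pose Rz (x x' : X) := exists u u', [/\ adj z u, adj z u', lab u = inl x,
                                       lab u' = inl x' & E u u'].
  have Rzeq : Defs.equivalence_rel Rz.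
    split.
    - move=> x; have [u [zu lu su]] := @nbr_lab z (inl x) (esym sz).
      exists u, u; split => //; apply: E_refl; by rewrite su sz.
    - by move=> x x' [u [u' [p1 p2 p3 p4 p5]]]; exists u', u; split => //; exact: E_sym.
    - move=> x x' x'' [u [u' [p1 p2 p3 p4 p5]]] [v [v' [q1 q2 q3 q4 q5]]].
      have e : u' = v by apply: (lab_inj p2 q1); rewrite p4 q3.
      subst v; exists u, v'; split => //; exact: E_trans p5 q5.
  have Rzpres : preserves M Rz.
    move=> s' x x' Ms' [u [u' [p1 p2 p3 p4 p5]]].
    have ez' : lab z = smap s' id (lab z) by rewrite lz.
    have [h' [h'U h'z h'l]] := unif_U Ms' N1 ez'.
    exists (h' u), (h' u'); split.
    - by rewrite -{1}h'z; exact: U_adj.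
    - by rewrite -{1}h'z; exact: U_adj.
    - by rewrite h'l p3.
    - by rewrite h'l p4.
    - exact: E_g.
  case: (proj2 Mp Rz Rzeq Rzpres) => [Rz1|Rzu].
    exfalso; apply: sa1; apply: esym; apply: Rz1.
    exists w', w''; split => //; exact: adj_sym.
  move=> u u' zu zu'.
  have [x lx] := lab_inl (side_nbrY sz zu).
  have [x' lx'] := lab_inl (side_nbrY sz zu').
  have [v [v' [q1 q2 q3 q4 q5]]] := Rzu x x'.
  have -> : u = v by apply: (lab_inj zu q1); rewrite lx q3.
  have -> : u' = v' by apply: (lab_inj zu' q2); rewrite lx' q4.
  exact: q5.
have nall : forall z', side z' = true -> nbrsRel z'.
  move=> z' sz'; apply: (@step_conn true nbrsRel _ z z') => //.
  move=> w0 z1 z2 sw0 w0z1 w0z2 nz1 u u' z2u z2u'.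
  have [y1 l1'] := lab_inr (side_nbrX sw0 w0z1).
  have [y2 l2'] := lab_inr (side_nbrX sw0 w0z2).
  have [tau [Ntau t12]] := Ntr y1 y2.
  have [x0' lw0] := lab_inl sw0.
  have ew0 : lab w0 = smap id tau (lab w0) by rewrite lw0.
  have [h2 [h2U h2w0 h2l]] := unif_U M1 Ntau ew0.
  have hz12 : h2 z1 = z2.
    apply: (lab_inj (v:=w0)) => //; first by rewrite -{1}h2w0; exact: U_adj.
    by rewrite h2l l1' l2' /= t12.
  case: (h2U) => [[[k hk kh] ad _] _ _].
  have ak : forall v, adj z2 v -> adj z1 (k v).
    by move=> v zv; apply/ad; rewrite kh hz12.
  have := E_g _ _ _ h2U (nz1 _ _ (ak _ z2u) (ak _ z2u')).
  by rewrite !kh.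
move=> p q.
have : E (proj1_sig p) (proj1_sig q).
  apply: (@step_conn false (E (proj1_sig p)) _ (proj1_sig p) (proj1_sig q)).
  - move=> z' v v' sz' zv zv' Ev.
    exact: E_trans Ev (nall _ sz' _ _ zv zv').
  - exact: (proj2_sig p).
  - exact: (proj2_sig q).
  - exact/E_refl/(proj2_sig p).
move=> [p' [q' [e1 e2 r]]].
have -> : p = p' by apply: sig_eqY.
have -> : q = q' by apply: sig_eqY.
exact: r.
Qed.

End Tree.

Theorem theorem5p1 (X Y : Type) (M : (X -> X) -> Prop) (N : (Y -> Y) -> Prop) :
  (exists x1 x2 : X, x1 <> x2) ->
  (exists y1 y2 : Y, y1 <> y2) ->
  perm_group M -> perm_group N ->
  nontrivial_group M -> nontrivial_group N ->
  forall (V : Type) (adj : V -> V -> Prop) (side : V -> bool)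
         (c : V -> V -> X + Y),
    is_tree adj -> is_bipartition adj side -> biregular X Y adj side ->
    legal_colouring adj side c ->
    (perm_transitive (box_product adj side c M N) <-> perm_transitive M) /\
    (perm_primitive (box_product adj side c M N) <->
       [/\ perm_primitive M, ~ perm_regular M & perm_transitive N]).
Proof.
move=> [xa [xb xab]] [ya [yb yab]] pgM pgN _ _ V adj side c
  [[v0] sym conn nocyc] bip _ legal.
split.
- split.
  + exact: (part1a sym bip legal xa ya v0).
  + exact: (part1b sym nocyc conn bip legal xa ya pgM pgN).
- split.
  + move=> hp; split.
    * exact: (part2_Mprim sym nocyc bip legal xa ya v0 hp).
    * exact: (part2_Mreg sym nocyc conn bip legal xa ya pgM v0 xab yab hp).
    * exact: (part2_N sym nocyc bip legal xa ya pgN v0 xab hp).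
  + move=> [Mp nreg Ntr].
    exact: (part2_conv sym nocyc conn bip legal xa ya pgM pgN Mp nreg Ntr).
Qed.
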